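(* Let $(X_i)_{i\in I}$ be a family of zero-dimensional coherent domains and $F\subseteq\prod_{i\in I}\mathcal V_{\le1}(X_i)\subseteq\prod_{i\in I}\mathcal V(X_i)$ a finite set. Then $\mathrm{conv}\,F$ is Lawson-compact in $\prod_{i\in I}\mathcal V(X_i)$.
   Context: A domain is a continuous dcpo; coherent means the intersection of two compact saturated subsets is compact; zero-dimensional means the Scott topology has a basis of clopens. $\mathcal V(X)$ is the set of continuous valuations on $X$ (strict, monotone, modular maps from Scott-opens to $[0,\infty]$ preserving directed unions), ordered pointwise, with pointwise addition and scaling; $\mathcal V_{\le1}(X)$ those with $\mu(X)\le1$. Products carry the componentwise order and operations. $\mathrm{conv}\,F$ denotes the set of finite convex combinations of elements of $F$. The Lawson topology is generated by the Scott-open sets and the complements of principal up-sets ${\uparrow}x$. *)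

(* Defs.v *)
From HB Require Import structures.
From mathcomp Require Import all_boot all_order all_algebra.
From mathcomp Require Import boolp classical_sets reals constructive_ereal ereal.
From mathcomp Require Import Rstruct.
From Stdlib Require Import List.

Set Implicit Arguments.
Unset Strict Implicit.
Unset Printing Implicit Defensive.
Import Order.TTheory GRing.Theory Num.Theory.

Local Open Scope classical_set_scope.
Local Open Scope ring_scope.

Notation RR := Rdefinitions.R.

Section OrderNotions.
Variable T : Type.
Variable le : T -> T -> Prop.

Definition is_partial_order : Prop :=
  (forall x, le x x) /\
  (forall x y z, le x y -> le y z -> le x z) /\
  (forall x y, le x y -> le y x -> x = y).

Definition directed (D : set T) : Prop :=
  (exists x, D x) /\
  (forall x y, D x -> D y -> exists z, D z /\ le x z /\ le y z).

Definition is_sup (D : set T) (s : T) : Prop :=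
  (forall d, D d -> le d s) /\
  (forall u, (forall d, D d -> le d u) -> le s u).

Definition is_dcpo : Prop :=
  is_partial_order /\ forall D, directed D -> exists s, is_sup D s.

Definition way_below (x y : T) : Prop :=
  forall D s, directed D -> is_sup D s -> le y s -> exists d, D d /\ le x d.

Definition is_domain : Prop :=
  is_dcpo /\
  forall x, directed [set y | way_below y x] /\ is_sup [set y | way_below y x] x.

Definition upper_set (A : set T) : Prop := forall x y, A x -> le x y -> A y.

Definition scott_open (U : set T) : Prop :=
  upper_set U /\
  forall D s, directed D -> is_sup D s -> U s -> exists d, D d /\ U d.

End OrderNotions.

Section Topology.
Variable T : Type.

Definition compact_wrt (opn : set T -> Prop) (K : set T) : Prop :=
  forall (J : Type) (U : J -> set T),
    (forall j, opn (U j)) ->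
    (forall x, K x -> exists j, U j x) ->
    exists s : list J, forall x, K x -> exists j, List.In j s /\ U j x.

Definition saturated_wrt (opn : set T -> Prop) (A : set T) : Prop :=
  forall x, (forall U, opn U -> (forall y, A y -> U y) -> U x) -> A x.

Definition generated_open (S : set T -> Prop) (U : set T) : Prop :=
  forall x, U x -> exists l : list (set T),
    (forall B, List.In B l -> S B) /\ (forall B, List.In B l -> B x) /\
    (forall y, (forall B, List.In B l -> B y) -> U y).

End Topology.

Section Domains.
Variables (T : Type) (le : T -> T -> Prop).

Definition scott_compact (K : set T) := compact_wrt (scott_open le) K.
Definition scott_saturated (K : set T) := saturated_wrt (scott_open le) K.

Definition coherent : Prop :=
  forall K1 K2, scott_compact K1 -> scott_saturated K1 ->
                scott_compact K2 -> scott_saturated K2 ->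
                scott_compact (K1 `&` K2).

Definition scott_clopen (V : set T) : Prop :=
  scott_open le V /\ scott_open le (~` V).

Definition zero_dimensional : Prop :=
  forall U x, scott_open le U -> U x ->
    exists V, scott_clopen V /\ V x /\ (forall y, V y -> U y).

Definition lawson_subbasis (B : set T) : Prop :=
  scott_open le B \/ exists x, B = ~` [set y | le x y].

Definition lawson_compact (K : set T) : Prop :=
  compact_wrt (generated_open lawson_subbasis) K.

End Domains.

Local Open Scope ereal_scope.

Section Valuations.
Variables (X : Type) (le : X -> X -> Prop).

Definition sopen := {U : set X | scott_open le U}.

Definition is_valuation (mu : sopen -> \bar RR) : Prop :=
  (forall U, 0 <= mu U) /\
  (forall U : sopen, (forall x, ~ proj1_sig U x) -> mu U = 0) /\
  (forall U V : sopen, proj1_sig U `<=` proj1_sig V -> mu U <= mu V) /\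
  (forall U V W W' : sopen,
      proj1_sig W = proj1_sig U `&` proj1_sig V ->
      proj1_sig W' = proj1_sig U `|` proj1_sig V ->
      mu U + mu V = mu W + mu W') /\
  (forall (J : Type) (D : J -> sopen) (W : sopen),
      (exists j : J, True) ->
      (forall j k, exists l, proj1_sig (D j) `<=` proj1_sig (D l) /\
                             proj1_sig (D k) `<=` proj1_sig (D l)) ->
      proj1_sig W = \bigcup_j proj1_sig (D j) ->
      mu W = ereal_sup [set mu (D j) | j in [set: J]]).

Definition valuation := {mu : sopen -> \bar RR | is_valuation mu}.

Definition val_fun (m : valuation) : sopen -> \bar RR := proj1_sig m.

Definition subprob (m : valuation) : Prop :=
  forall U : sopen, (forall x, proj1_sig U x) -> val_fun m U <= 1.

End Valuations.

Section Product.
Variables (I : Type) (X : I -> Type) (le : forall i, X i -> X i -> Prop).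

Definition prodV := forall i, valuation (@le i).

Definition prodV_le (p q : prodV) : Prop :=
  forall i (U : sopen (@le i)), val_fun (p i) U <= val_fun (q i) U.

Definition conv (F : list prodV) : set prodV :=
  [set p | exists (n : nat) (a : 'I_n -> RR) (q : 'I_n -> prodV),
      (forall k, List.In (q k) F) /\
      (forall k, (0 <= a k)%R) /\
      (\sum_(k < n) a k = 1)%R /\
      (forall i (U : sopen (@le i)),
          val_fun (p i) U = \sum_(k < n) ((a k)%:E * val_fun (q k i) U))].

End Product.

(* Main.v *)
From HB Require Import structures.
From mathcomp Require Import all_boot all_order all_algebra.
From mathcomp Require Import all_classical all_reals all_analysis.
From mathcomp Require Import Rstruct Rstruct_topology.
Require Import Defs.
From Stdlib Require Import List.
Set Implicit Arguments. Unset Strict Implicit. Unset Printing Implicit Defensive.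
Import Order.TTheory GRing.Theory Num.Theory.
Import numFieldNormedType.Exports.
Local Open Scope classical_set_scope.
Local Open Scope ring_scope.

Section Val.
Variables (T : Type) (le : T -> T -> Prop).

Lemma scott_open_setT : scott_open le setT.
Proof. split; first by []. by move=> D s [[d Dd] _] _ _; exists d. Qed.

Definition topU : sopen le := exist _ setT scott_open_setT.

Lemma val_bounds (m : valuation le) (hm : subprob m) U :
  (0 <= val_fun m U)%E /\ (val_fun m U <= 1)%E.
Proof.
have [h0 [hs [hmono _]]] := proj2_sig m; split; first exact: h0.
apply: (le_trans (hmono U topU _)) => //.
exact: (hm topU).
Qed.

Lemma val_fin (m : valuation le) (hm : subprob m) U : val_fun m U \is a fin_num.
Proof.
have [h0 h1] := val_bounds hm U.
by rewrite ge0_fin_numE // (le_lt_trans h1) // ltry.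
Qed.

Lemma dir_bound (J : Type) (D : J -> sopen le) (j0 : J)
  (hdir : forall j k, exists l, proj1_sig (D j) `<=` proj1_sig (D l) /\
                             proj1_sig (D k) `<=` proj1_sig (D l))
  (KK : eqType) (h : KK -> J) (s : list KK) :
  exists j, forall k, k \in s -> proj1_sig (D (h k)) `<=` proj1_sig (D j).
Proof.
elim: s => [|a s [j1 IH]]; first by exists j0.
have [l [H1 H2]] := hdir (h a) j1.
exists l => k; rewrite seq.in_cons => /orP[/eqP -> //|/IH Hk]; apply: subset_trans Hk H2.
Qed.


Section Comb.
Variables (m : nat) (g : 'I_m -> valuation le) (hg : forall k, subprob (g k))
  (c : 'I_m -> RR) (hc : forall k, 0 <= c k).

Definition vk k U := fine (val_fun (g k) U).
Lemma vkE k U : val_fun (g k) U = (vk k U)%:E.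
Proof. by rewrite /vk fineK // val_fin. Qed.
Lemma vk_ge0 k U : 0 <= vk k U.
Proof. by have [h _] := val_bounds (hg k) U; rewrite -lee_fin -vkE. Qed.
Lemma vk_le1 k U : vk k U <= 1.
Proof. by have [_ h] := val_bounds (hg k) U; rewrite -lee_fin -vkE. Qed.
Lemma vk_mono k (U V : sopen le) : proj1_sig U `<=` proj1_sig V -> vk k U <= vk k V.
Proof.
have [_ [_ [hm _]]] := proj2_sig (g k).
by move=> /hm; rewrite -lee_fin -!vkE.
Qed.

Definition cf U := \sum_k c k * vk k U.

Lemma comb_val : is_valuation (fun U => (cf U)%:E).
Proof.
split.
  by move=> U; rewrite lee_fin; apply: sumr_ge0 => k _; apply: mulr_ge0 => //; apply: vk_ge0.
split.
  move=> U hU; rewrite /cf big1 // => k _.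
  have [_ [hs _]] := proj2_sig (g k).
  by rewrite /vk /val_fun hs // mulr0.
split.
  move=> U V hUV; rewrite lee_fin; apply: ler_sum => k _.
  by apply: ler_wpM2l => //; apply: vk_mono.
split.
  move=> U V W W' HW HW'; rewrite -!EFinD; congr (_%:E).
  rewrite /cf -!big_split; apply: eq_bigr => k _ /=; rewrite -!mulrDr; congr (_ * _).
  have [_ [_ [_ [hmod _]]]] := proj2_sig (g k).
  have := hmod U V W W' HW HW'.
  change ((val_fun (g k) U + val_fun (g k) V = val_fun (g k) W + val_fun (g k) W')%E -> vk k U + vk k V = vk k W + vk k W').
  by rewrite !vkE -!EFinD => -[].
move=> J D W [j0 _] hdir HW.
have hsup k : (vk k W)%:E = ereal_sup [set (vk k (D j))%:E | j in [set: J]].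
  have [_ [_ [_ [_ hd]]]] := proj2_sig (g k).
  have := hd J D W (ex_intro _ j0 I) hdir HW.
  change (val_fun (g k) W = ereal_sup [set val_fun (g k) (D j) | j in [set: J]] -> (vk k W)%:E = ereal_sup [set (vk k (D j))%:E | j in [set: J]]); rewrite vkE => ->.
  have -> : (fun j => proj1_sig (g k) (D j)) = (fun j => (vk k (D j))%:E).
    by apply/funext => j; rewrite -vkE.
  by [].
have DW j : proj1_sig (D j) `<=` proj1_sig W by rewrite HW => x Dx; exists j.
apply/eqP; rewrite eq_le; apply/andP; split; last first.
  apply: ge_ereal_sup => _ [j _ <-]; rewrite lee_fin; apply: ler_sum => k _.
  by apply: ler_wpM2l => //; apply: vk_mono.
apply/lee_addgt0Pr => e e0.
set B := \sum_k c k.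
have B0 : 0 <= B by apply: sumr_ge0.
set e' := e / (B + 1).
have B1 : 0 < B + 1 by apply: ltr_wpDl.
have e'0 : 0 < e' by apply: divr_gt0.
have hk k : exists j, vk k W - e' < vk k (D j).
  have : ((vk k W - e')%:E < ereal_sup [set (vk k (D j))%:E | j in [set: J]])%E.
    by rewrite -hsup lte_fin ltrBlDr ltrDl.
  by move=> /ereal_sup_gt [_ [j _ <-]]; rewrite lte_fin => h; exists j.
have [jf hjf] := choice hk.
have [js hjs] := dir_bound j0 hdir jf (enum 'I_m).
have Hle : cf W <= cf (D js) + e.
  apply: (@le_trans _ _ (\sum_k c k * (vk k (D js) + e'))).
    apply: ler_sum => k _; apply: ler_wpM2l => //.
    apply: (@le_trans _ _ (vk k (D (jf k)) + e')).
      by rewrite -lerBlDr; apply: ltW.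
    by rewrite lerD2r; apply: vk_mono; apply: hjs; rewrite mem_enum.
  rewrite /cf; under eq_bigr => k _ do rewrite mulrDr.
  rewrite big_split /= lerD2l -mulr_suml -/B.
  by rewrite /e' mulrA ler_pdivrMr // [B * e]mulrC ler_wpM2l ?ltW // ?ltrDl ?lerDl ?ltr01.
have H1 : ((cf (D js))%:E <= ereal_sup [set (cf (D j))%:E | j in [set: J]])%E.
  by apply: ereal_sup_ubound; exists js.
apply: (le_trans _ (leeD2r _ H1)).
by rewrite -EFinD lee_fin.
Qed.
End Comb.
End Val.

Lemma tnth_In (T : Type) (s : list T) (k : 'I_(size s)) : List.In (tnth (in_tuple s) k) s.
Proof.
elim: s k => [[//]|a s IH] [[|k] hk]; first by left.
right; have hk' : (k < size s)%N by [].
have := IH (Ordinal hk').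
by rewrite !(tnth_nth a).
Qed.

Lemma In_tnth (T : Type) (s : list T) x : List.In x s ->
  exists k : 'I_(size s), tnth (in_tuple s) k = x.
Proof.
elim: s => [//|a s IH] /= [->|/IH [k hk]].
  by exists ord0; rewrite (tnth_nth x).
exists (lift ord0 k); move: hk; rewrite !(tnth_nth x) /=.
by [].
Qed.

Lemma memIn (T : eqType) (x : T) (s : list T) : x \in s -> List.In x s.
Proof.
elim: s => [//|a s IH]; rewrite seq.in_cons => /orP[/eqP ->|/IH]; [left|right] => //.
Qed.

Lemma val_ext (T : Type) (le : T -> T -> Prop) (m1 m2 : valuation le) :
  val_fun m1 = val_fun m2 -> m1 = m2.
Proof.
case: m1 m2 => f1 h1 [f2 h2] /= e; subst f2; congr exist; exact: Prop_irrelevance.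
Qed.

Lemma contD (m:nat) (f g : 'rV[RR]_m -> RR) : continuous f -> continuous g -> continuous (f+g).
Proof.
move=> hf hg w. have := hf w. have := hg w. rewrite /continuous_at. move=> h1 h2.
exact: (@cvgD _ (RR^o) _ _ _ f g _ _ h2 h1).
Qed.
Lemma contM (m:nat) (f g : 'rV[RR]_m -> RR) : continuous f -> continuous g -> continuous (f \* g).
Proof.
move=> hf hg w. have := hf w. have := hg w. rewrite /continuous_at. move=> h1 h2.
exact: (@cvgM RR _ _ _ f g _ _ h2 h1).
Qed.

Lemma cont_lin (m : nat) (c : 'I_m -> RR) :
  continuous (fun w : 'rV[RR]_m => \sum_k w ord0 k * c k).
Proof.
suff H : forall l : list 'I_m, continuous (fun w : 'rV[RR]_m => \sum_(k <- l) w ord0 k * c k).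
  exact: H.
elim => [|a l IH].
  rewrite (_ : (fun w : 'rV[RR]_m => _) = fun _ => 0); first exact: cst_continuous.
  by apply/funext => w; rewrite big_nil.
rewrite (_ : (fun w : 'rV[RR]_m => _) =
   (fun w : 'rV[RR]_m => w ord0 a * c a) + (fun w => \sum_(k <- l) w ord0 k * c k)).
  apply: contD => //.
  apply: (@contM _ (fun w : 'rV[RR]_m => w ord0 a) (fun _ => c a)); first exact: coord_continuous.
  exact: cst_continuous.
by apply/funext => w; rewrite big_cons.
Qed.

Lemma open_forall (T : topologicalType) (m : nat) (O : 'I_m -> set T) :
  (forall k, open (O k)) -> open [set w | forall k, O k w].
Proof.
move=> hO.
suff H : forall l : list 'I_m, open [set w | forall k, k \in l -> O k w].
  rewrite (_ : [set w | forall k, O k w] = [set w | forall k, k \in enum 'I_m -> O k w]) //.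
  rewrite predeqE => w; split => h k //; apply: h; by rewrite mem_enum.
elim => [|a l IH].
  have -> : [set w | forall k, k \in [::] -> O k w] = setT.
    by rewrite predeqE => w; split.
  exact: openT.
have -> : [set w | forall k, k \in a :: l -> O k w] = O a `&` [set w | forall k, k \in l -> O k w].
  2: exact: openI.
rewrite predeqE => w; split.
  by move=> h; split; [apply: h; rewrite mem_head|move=> k hk; apply: h; rewrite seq.in_cons hk orbT].
by move=> [h1 h2] k; rewrite seq.in_cons => /orP[/eqP ->|/h2].
Qed.

Lemma open_ltE (a : \bar RR) : open [set y : RR | (y%:E < a)%E].
Proof.
case: a => [r| |].
- rewrite (_ : [set y : RR | _] = [set y | y < r]); first exact: open_lt.
  by rewrite predeqE => y /=; rewrite lte_fin.
- rewrite (_ : [set y : RR | _] = setT); first exact: openT.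
  by rewrite predeqE => y; split => // _; rewrite /= ltry.
- rewrite (_ : [set y : RR | _] = set0); first exact: open0.
  by rewrite predeqE => y; split => //=; rewrite ltNge leNye.
Qed.

Section Prod.
Variables (I : Type) (X : I -> Type) (le : forall i, X i -> X i -> Prop).
Variable F : list (prodV le).
Hypothesis hF : forall p, List.In p F -> forall i, subprob (p i).

Definition qF (k : 'I_(size F)) : prodV le := tnth (in_tuple F) k.
Lemma hq i k : subprob (qF k i). Proof. exact: (@hF _ (tnth_In k) i). Qed.
Arguments hq : clear implicits.
Definition pos (b : 'I_(size F) -> RR) k := Num.max (b k) 0.
Lemma pos_ge0 b k : 0 <= pos b k. Proof. by rewrite /pos le_max lexx orbT. Qed.
Lemma pos_id b : (forall k, 0 <= b k) -> pos b = b.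
Proof. by move=> h; apply/funext => k; rewrite /pos; apply/max_idPl. Qed.

Definition comb (b : 'I_(size F) -> RR) : prodV le :=
  fun i => exist _ _ (comb_val (hq i) (pos_ge0 b)).
Definition combv (v : 'rV[RR]_(size F)) := comb (fun k => v ord0 k).
Definition Delta := [set v : 'rV[RR]_(size F) |
  (forall k, 0 <= v ord0 k) /\ \sum_k v ord0 k = 1].

Lemma vkE' i k U : val_fun (qF k i) U = (vk (fun k => qF k i) k U)%:E.
Proof. exact: (vkE (hq i) k U). Qed.

Lemma comb_le b b' : (forall k, b k <= b' k) -> prodV_le (comb b) (comb b').
Proof.
move=> h i U; rewrite /= lee_fin; apply: ler_sum => k _; apply: ler_wpM2r.
  exact: (vk_ge0 (hq i)).
by rewrite /pos ge_max !le_max h lexx !orbT.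
Qed.

Lemma comb_conv v : Delta v -> conv F (combv v).
Proof.
move=> [h0 h1]; exists (size F), (fun k => v ord0 k), qF.
split; first by move=> k; exact: (tnth_In k).
split => //; split => // i U.
rewrite /= pos_id // -sumEFin; apply: eq_bigr => k _.
by rewrite vkE' -EFinM.
Qed.


Lemma key_scott S (hS : scott_open (@prodV_le I X le) S) v :
  Delta v -> S (combv v) ->
  exists V : set 'rV[RR]_(size F), open V /\ V v /\ forall w, Delta w -> V w -> S (combv w).
Proof.
move=> [h0 h1] hs.
set D := [set p | exists r, 0 <= r < 1 /\ p = comb (fun k => r * v ord0 k)].
have hdir : directed (@prodV_le I X le) D.
  split; first by exists (comb (fun k => 0 * v ord0 k)), 0; rewrite lexx ltr01.
  move=> _ _ [r1 [hr1 ->]] [r2 [hr2 ->]].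
  exists (comb (fun k => Num.max r1 r2 * v ord0 k)); split.
    exists (Num.max r1 r2); split => //.
    by move: hr1 hr2 => /andP[a1 b1] /andP[a2 b2]; rewrite le_max a1 /= gt_max b1 b2.
  by split; apply: comb_le => k; apply: ler_wpM2r => //; rewrite le_max lexx ?orbT.
have hsup : is_sup (@prodV_le I X le) D (combv v).
  split.
    move=> _ [r [/andP[r0 r1] ->]]; apply: comb_le => k; rewrite ler_piMl //; exact: ltW.
  move=> u hu i U.
  rewrite /= pos_id //.
  apply/lee_mul01Pr.
    by rewrite lee_fin; apply: sumr_ge0 => k _; apply: mulr_ge0 => //; exact: (vk_ge0 (hq i)).
  move=> r /andP[r0 r1].
  have := hu _ (ex_intro _ r (conj (introT andP (conj (ltW r0) r1)) erefl)) i U.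
  rewrite /= pos_id; last by move=> k; apply: mulr_ge0 => //; exact: ltW.
  by rewrite -EFinM mulr_sumr; under eq_bigr do rewrite mulrA.
have [hup hinacc] := hS.
have [_ [[r [/andP[r0 r1] ->]] Sd]] := hinacc D (combv v) hdir hsup hs.
pose O k := if v ord0 k == 0 then setT
   else (fun w : 'rV[RR]_(size F) => w ord0 k) @^-1` [set x | r * v ord0 k < x].
exists [set w | forall k, O k w]; split.
  apply: open_forall => k; rewrite /O; case: ifP => _; first exact: openT.
  by apply: open_comp; [move=> w _; exact: coord_continuous | exact: open_gt].
split.
  move=> k; rewrite /O; case: ifP => // /negbT hk /=.
  rewrite -[X in _ < X]mul1r ltr_pM2r //.
  by rewrite lt_def hk h0.
move=> w [hw0 hw1] hV; apply: (hup _ _ Sd); apply: comb_le => k.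
have := hV k; rewrite /O; case: ifP => [/eqP -> _| _ /= /ltW //].
by rewrite mulr0; exact: hw0.
Qed.

Lemma key_up x v : Delta v -> ~ (@prodV_le I X le) x (combv v) ->
  exists V : set 'rV[RR]_(size F), open V /\ V v /\
    forall w, Delta w -> V w -> ~ (@prodV_le I X le) x (combv w).
Proof.
move=> [h0 h1] hn.
have [i [U hiu]] : exists i U, ~ (val_fun (x i) U <= val_fun (combv v i) U)%E.
  apply: contra_notP hn => H i U; apply: contrapT => h; apply: H; by exists i, U.
pose s := fun w : 'rV[RR]_(size F) => \sum_k w ord0 k * vk (fun k => qF k i) k U.
have hsv : val_fun (combv v i) U = (s v)%:E by rewrite /= pos_id.
have ha : ((s v)%:E < val_fun (x i) U)%E by rewrite -hsv ltNge; apply/negP.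
exists (s @^-1` [set y : RR | (y%:E < val_fun (x i) U)%E]); split.
  by apply: open_comp; [move=> w _; exact: cont_lin | exact: open_ltE].
split; first exact: ha.
move=> w [hw0 _] hw hle.
have := hle i U; rewrite /= pos_id // => h.
by have := le_lt_trans h hw; rewrite ltxx.
Qed.

Lemma key_sub B v : lawson_subbasis (@prodV_le I X le) B -> Delta v -> B (combv v) ->
  exists V : set 'rV[RR]_(size F), open V /\ V v /\ forall w, Delta w -> V w -> B (combv w).
Proof.
case => [hS | [x ->]]; first exact: key_scott.
move=> hv hn; exact: key_up.
Qed.

Lemma key_gen U v : generated_open (lawson_subbasis (@prodV_le I X le)) U ->
  Delta v -> U (combv v) ->
  exists V : set 'rV[RR]_(size F), open V /\ V v /\ forall w, Delta w -> V w -> U (combv w).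
Proof.
move=> hU hv hu; have [l [hl1 [hl2 hl3]]] := hU _ hu.
suff [V [oV [Vv HV]]] : exists V : set 'rV[RR]_(size F), open V /\ V v /\
    forall w, Delta w -> V w -> forall B, List.In B l -> B (combv w).
  exists V; split=> //; split=> // w hw Vw; apply: hl3; exact: HV.
elim: l hl1 hl2 {hl3} => [|B l IH] hl1 hl2.
  by exists setT; split; [exact: openT | split=> // w _ _ B []].
have [V1 [op1 [Vv1 H1]]] := key_sub (hl1 B (or_introl erefl)) hv (hl2 B (or_introl erefl)).
have [V2 [op2 [Vv2 H2]]] := IH (fun B h => hl1 B (or_intror h)) (fun B h => hl2 B (or_intror h)).
exists (V1 `&` V2); split; first exact: openI.
split; first by split.
by move=> w hw [w1 w2] B' [<-|hB']; [exact: H1| exact: H2].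
Qed.


Lemma conv_comb p : conv F p -> exists v, Delta v /\ p = combv v.
Proof.
move=> [n [a [q [hq' [ha [hs hv]]]]]].
have hidx k : exists j : 'I_(size F), qF j = q k by exact: In_tnth (hq' k).
have [idx hidx'] := choice hidx.
pose b := fun j => \sum_(k | idx k == j) a k.
have hb j : 0 <= b j by apply: sumr_ge0.
exists (\row_j b j); split.
  split; first by move=> k; rewrite mxE.
  under eq_bigr do rewrite mxE.
  by rewrite -hs (partition_big idx xpredT).
apply: functional_extensionality_dep => i; apply: val_ext; apply: funext => U.
rewrite hv /= pos_id; last by move=> k; rewrite mxE.
under eq_bigr => k _ do rewrite -(hidx' k) vkE' -EFinM.
rewrite sumEFin; congr (_%:E).
rewrite (partition_big idx xpredT) //=; apply: eq_bigr => j _.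
rewrite mxE /b mulr_suml; apply: eq_bigr => k /eqP <-.
by [].
Qed.

Lemma Delta_compact : compact Delta.
Proof.
have cube : compact [set v : 'rV[RR]_(size F) | forall k, `[0, 1]%classic (v ord0 k)].
  have := (@rV_compact RR (size F) (fun _ => (`[0, 1]%classic : set RR)) (fun _ => @segment_compact RR 0 1)).
  by [].
apply: (subclosed_compact _ cube).
  rewrite (_ : Delta = \bigcap_(k in setT) ((fun w : 'rV[RR]_(size F) => w ord0 k) @^-1` [set x | 0 <= x])
     `&` ((fun w : 'rV[RR]_(size F) => \sum_k w ord0 k * 1) @^-1` [set x | x = 1])).
    apply: closedI.
      apply: closed_bigI => k _; apply: preimage_closed; last exact: closed_ge.
      by move=> w _; exact: coord_continuous.
    apply: preimage_closed; last exact: closed_eq.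
    by move=> w _; exact: cont_lin.
  rewrite predeqE => w; split.
    move=> [h0 h1]; split; first by move=> k _; exact: h0.
    by rewrite /=; under eq_bigr do rewrite mulr1.
  move=> [h0 h1]; split; first by move=> k; exact: h0.
  by move: h1; rewrite /=; under eq_bigr do rewrite mulr1.
move=> w [h0 h1] k; rewrite /= in_itv /= h0 /=.
by rewrite -h1 (bigD1 k) //= lerDl; apply: sumr_ge0.
Qed.

Lemma main_aux : lawson_compact (@prodV_le I X le) (conv F).
Proof.
move=> J Uo hUo hcov.
have cpt := Delta_compact; rewrite compact_cover in cpt.
pose O := fun j : {classic J} => \bigcup_(V in [set V : set 'rV[RR]_(size F) |
   open V /\ forall w, Delta w -> V w -> Uo j (combv w)]) V.
have Oop : forall j, [set: {classic J}] j -> open (O j).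
  by move=> j _; apply: bigcup_open => V [].
have hcovD : Delta `<=` cover [set: {classic J}] O.
  move=> v hv; have [j hj] := hcov _ (comb_conv hv).
  have [V [oV [Vv HV]]] := key_gen (hUo j) hv hj.
  by exists j => //; exists V.
have [D' _ hD'] := cpt {classic J} setT O Oop hcovD.
exists (finmap.enum_fset D').
move=> p /conv_comb [v [hv ->]].
have [j hj [V [oV hV] Vv]] := hD' v hv.
exists j; split; [exact: (memIn (x:=j) (s:=finmap.enum_fset D') hj) | exact: hV v hv Vv].
Qed.

End Prod.

Theorem mainTheorem15 (I : Type) (X : I -> Type)
  (le : forall i, X i -> X i -> Prop)
  (hdom : forall i, is_domain (le i))
  (hcoh : forall i, coherent (le i))
  (hzd : forall i, zero_dimensional (le i))
  (F : list (prodV le))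
  (hF : forall p, List.In p F -> forall i, subprob (p i)) :
  lawson_compact (@prodV_le I X le) (conv F).
Proof. exact: main_aux hF. Qed.
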